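(* An integral domain $D$ is a quasilocal API-domain if and only if for each nonempty subset $\{a_\alpha\}_{\alpha\in\Lambda}$ of $D\setminus\{0\}$ there exist a natural number $n$ and $\alpha_0\in\Lambda$ with $a_{\alpha_0}^n\mid a_\alpha^n$ for every $\alpha\in\Lambda$.
   Context: Quasilocal: having a unique maximal ideal. An integral domain $D$ is an API-domain if for every nonempty subset $\{d_\alpha\}_{\alpha\in\Lambda}$ of $D\setminus\{0\}$ there is a natural number $n$ such that the ideal generated by $\{d_\alpha^n\}_{\alpha\in\Lambda}$ is principal. *)

(* Defs.v *)
From mathcomp Require Import all_boot all_algebra.
Set Implicit Arguments. Unset Strict Implicit. Unset Printing Implicit Defensive.
Import GRing.Theory.
Local Open Scope ring_scope.

Definition is_ideal (D : idomainType) (I : D -> Prop) : Prop :=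
  I 0 /\ (forall x y, I x -> I y -> I (x + y)) /\ (forall r x, I x -> I (r * x)).

Definition ideal_gen (D : idomainType) (T : D -> Prop) : D -> Prop :=
  fun x => forall I : D -> Prop, is_ideal I -> (forall t, T t -> I t) -> I x.

Definition principal (D : idomainType) (I : D -> Prop) : Prop :=
  exists g : D, forall x, I x <-> exists r : D, x = r * g.

Definition maximal_ideal (D : idomainType) (M : D -> Prop) : Prop :=
  is_ideal M /\ ~ M 1 /\
  forall J : D -> Prop, is_ideal J -> (forall x, M x -> J x) ->
    (forall x, J x <-> M x) \/ J 1.

Definition quasilocal (D : idomainType) : Prop :=
  exists M : D -> Prop, maximal_ideal M /\
    forall N : D -> Prop, maximal_ideal N -> forall x, N x <-> M x.

Definition divides (D : idomainType) (a b : D) : Prop := exists c : D, b = c * a.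

Definition nonempty_nonzero_subset (D : idomainType) (S : D -> Prop) : Prop :=
  (exists d, S d) /\ (forall d, S d -> d != 0).

Definition API_domain (D : idomainType) : Prop :=
  forall S : D -> Prop, nonempty_nonzero_subset S ->
    exists n : nat, (0 < n)%N /\
      principal (ideal_gen (fun x => exists d, S d /\ x = d ^+ n)).

(* Main.v *)
Require Import Defs.
From mathcomp Require Import all_boot all_algebra.
From mathcomp Require Import ring.
From mathcomp Require Import boolp classical_sets.
Local Open Scope ring_scope.
Import GRing.Theory.

Lemma is_ideal_ext (D : idomainType) (X Y : D -> Prop) :
  (forall x, X x <-> Y x) -> is_ideal X -> is_ideal Y.
Proof.
move=> e [h0 [hD hM]]; split; first exact/e.
split=> [x y /e hx /e hy|r x /e hx]; apply/e; auto.
Qed.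

Lemma exists_max (D : idomainType) (I : D -> Prop) :
  is_ideal I -> ~ I 1 -> exists M, maximal_ideal M /\ forall x, I x -> M x.
Proof.
move=> II nI1.
pose P := fun X : set D => is_ideal (fun y => X y \/ I y) /\ ~ (X 1 \/ I 1).
have [A [PA Amax]] : exists A, P A /\ forall B, (A `<` B)%classic -> ~ P B.
  apply: Zorn_bigcup => F FP Ftot.
  have [I0 [IDD IM]] := II.
  rewrite /P /bigcup /=; split.
    split; first by right.
    split.
      move=> x y [[X FX Xx]|Ix] [[Y FY Yy]|Iy].
      - have [XY|YX] := Ftot X Y FX FY.
          have [[_ [hD _]] _] := FP Y FY.
          have [Z|Iz] : (Y (x+y) \/ I (x+y)) by apply: hD; left; [apply: XY|].
          + by left; exists Y.
          + by right.
        have [[_ [hD _]] _] := FP X FX.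
        have [Z|Iz] : (X (x+y) \/ I (x+y)) by apply: hD; auto.
          by left; exists X.
        by right.
      - have [[_ [hD _]] _] := FP X FX.
        have [Z|Iz] : (X (x+y) \/ I (x+y)) by apply: hD; auto.
          by left; exists X.
        by right.
      - have [[_ [hD _]] _] := FP Y FY.
        have [Z|Iz] : (Y (x+y) \/ I (x+y)) by apply: hD; auto.
          by left; exists Y.
        by right.
      - by right; apply: IDD.
    move=> r x [[X FX Xx]|Ix].
      have [[_ [_ hM]] _] := FP X FX.
      have [Z|Iz] : (X (r*x) \/ I (r*x)) by apply: hM; auto.
        by left; exists X.
      by right.
    by right; apply: IM.
  move=> [[X FX X1]|I1]; last by [].
  by have [_ H] := FP X FX; apply: H; left.
exists (fun y => A y \/ I y); split; last by move=> x; right.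
split; first exact: PA.1.
split; first exact: PA.2.
move=> J IJ MJ.
have [J1|nJ1] := pselect (J 1); first by right.
have PJ : P J.
  split; last by move=> [//|/nI1].
  apply: is_ideal_ext IJ => x; split; first by left.
  by move=> [//|Ix]; apply: MJ; right.
have [JA|nJA] := pselect (J `<=` A)%classic.
  left=> x; split; first by move=> /JA; left.
  exact: MJ.
exfalso; apply: (Amax J) PJ; split=> // x Ax; apply: MJ; by left.
Qed.

Definition unitD (D : idomainType) (x : D) := exists y, y * x = 1.
Arguments unitD {D}.

Lemma geom_sub {D : idomainType} (b : D) (n : nat) :
  exists s, 1 - b ^+ n = (1 - b) * s.
Proof.
elim: n => [|n [s hs]]; first by exists 0; rewrite expr0 subrr mulr0.
exists (s + b ^+ n); rewrite exprS.
have -> : 1 - b * b ^+ n = (1 - b ^+ n) + b ^+ n * (1 - b) by ring.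
rewrite hs; ring.
Qed.

Lemma unit_of_div (D : idomainType) (a b c : D) (n : nat) :
  a + b = 1 -> b ^+ n.+1 = c * a ^+ n.+1 -> unitD a.
Proof.
move=> hab hb.
have [s hs] := geom_sub b n.+1.
have ea : 1 - b = a by rewrite -hab; ring.
rewrite ea in hs.
exists (c * a ^+ n + s).
have -> : 1 = b ^+ n.+1 + (1 - b ^+ n.+1) by ring.
rewrite hs hb exprSr; ring.
Qed.

Lemma unit_mul (D : idomainType) (r x : D) : unitD (r * x) -> unitD x.
Proof. by move=> [y hy]; exists (y * r); rewrite -mulrA. Qed.

Lemma not_unit0 (D : idomainType) : ~ unitD (0 : D).
Proof. by move=> [y]; rewrite mulr0 => /eqP; rewrite eq_sym oner_eq0. Qed.

Lemma local_of_cond (D : idomainType) :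
  (forall S : D -> Prop, nonempty_nonzero_subset S ->
     exists n : nat, (0 < n)%N /\
       exists a0 : D, S a0 /\ forall a : D, S a -> divides (a0 ^+ n) (a ^+ n)) ->
  forall a : D, unitD a \/ unitD (1 - a).
Proof.
move=> H a.
have [a0|an0] := eqVneq a 0.
  by right; exists 1; rewrite a0 subr0 mulr1.
have [a1|an1] := eqVneq (1 - a) 0.
  by left; exists 1; move/eqP: a1; rewrite subr_eq0 => /eqP <-; rewrite mulr1.
have [|n [n0 [a0 [Sa0 hdiv]]]] := H (fun x => x = a \/ x = 1 - a).
  split; first by exists a; left.
  by move=> d [->|->].
case: n n0 hdiv => [//|n] _ hdiv.
case: Sa0 => e; subst a0.
  have [c hc] := hdiv (1 - a) (or_intror erefl).
  left; apply: (@unit_of_div D a (1 - a) c n _ hc); ring.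
have [c hc] := hdiv a (or_introl erefl).
right; apply: (@unit_of_div D (1 - a) a c n _ hc); ring.
Qed.

Theorem theorem4 (D : idomainType) :
  (quasilocal D /\ API_domain D) <->
  (forall S : D -> Prop, nonempty_nonzero_subset S ->
     exists n : nat, (0 < n)%N /\
       exists a0 : D, S a0 /\ forall a : D, S a -> divides (a0 ^+ n) (a ^+ n)).
Proof.
split.
- move=> [[M [[MI [nM1 Mmax]] Muniq]] HA] S [[d1 Sd1] Snz].
  have MI' := MI; case: MI' => [M0 [MD MM]].
  have nonunitM : forall x, ~ unitD x -> M x.
    move=> x nux.
    have Ix : is_ideal (fun y => exists r, y = r * x).
      split; first by exists 0; rewrite mul0r.
      split; first by move=> _ _ [r1 ->] [r2 ->]; exists (r1 + r2); rewrite mulrDl.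
      by move=> r _ [r1 ->]; exists (r * r1); rewrite mulrA.
    have nI1 : ~ (exists r, (1 : D) = r * x).
      by move=> [r hr]; apply: nux; exists r.
    have [N [NN NI]] := @exists_max D _ Ix nI1.
    by apply/(Muniq N NN); apply: NI; exists 1; rewrite mul1r.
  have unitnM : forall x, unitD x -> ~ M x.
    by move=> x [y hy] Mx; apply: nM1; rewrite -hy; apply: MM.
  have [n [n0 [g hg]]] := HA S (conj (ex_intro _ d1 Sd1) Snz).
  set T := (fun x => exists d, S d /\ x = d ^+ n) in hg.
  have genT : forall d, S d -> exists s, d ^+ n = s * g.
    move=> d Sd; apply/hg => I _ HT; apply: HT; by exists d.
  have [s1 hs1] := genT d1 Sd1.
  have gnz : g != 0.
    apply/eqP=> g0; move: hs1; rewrite g0 mulr0 => /eqP.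
    by rewrite expf_eq0 (negbTE (Snz _ Sd1)) andbF.
  have [[d [Sd [s [hs us]]]]|nex] :=
      pselect (exists d, S d /\ exists s, d ^+ n = s * g /\ unitD s).
    exists n; split => //; exists d; split => // a Sa.
    have [t ht] := genT a Sa.
    case: us => v hv.
    exists (t * v); rewrite ht hs -mulrA (mulrA v) hv mul1r //.
  exfalso.
  have : ideal_gen T g by apply/hg; exists 1; rewrite mul1r.
  move=> /(_ (fun x => exists r, M r /\ x = r * g)) [].
  + split; first by exists 0; rewrite mul0r.
    split; first by move=> _ _ [r1 [Mr1 ->]] [r2 [Mr2 ->]]; exists (r1 + r2); rewrite mulrDl; split => //; apply: MD.
    by move=> r _ [r1 [Mr1 ->]]; exists (r * r1); rewrite mulrA; split => //; apply: MM.
  + move=> t [d [Sd ->]].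
    have [s hs] := genT d Sd.
    exists s; split => //; apply: nonunitM => us; apply: nex; exists d; split => //; by exists s.
  + move=> r [Mr hr].
    have r1 : r = 1.
      apply/eqP; rewrite eq_sym -subr_eq0.
      have : (1 - r) * g == 0 by rewrite mulrBl mul1r -hr subrr.
      by rewrite mulf_eq0 (negbTE gnz) orbF.
    by apply: nM1; rewrite -r1.
- move=> H.
  have loc := @local_of_cond D H.
  split.
  + pose M := fun x : D => ~ unitD x.
    have MI : is_ideal M.
      split; first exact: not_unit0.
      split.
        move=> x y nx ny [u hu].
        have [ux|ux] := loc (u * x).
          by apply: nx; apply: unit_mul ux.
        apply: ny; apply: (@unit_mul D u).
        have -> : u * y = 1 - u * x by rewrite -hu; ring.
        exact: ux.
      by move=> r x nx /unit_mul.
    have nM1 : ~ M 1 by apply; exists 1; rewrite mulr1.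
    have Mmax : maximal_ideal M.
      split => //; split => // J [J0 [JD JM]] MJ.
      have [[j [Jj [y hy]]]|nj] := pselect (exists j, J j /\ unitD j).
        by right; rewrite -hy; apply: JM.
      left => x; split; last exact: MJ.
      by move=> Jx ux; apply: nj; exists x.
    exists M; split => // N [NI [nN1 Nmax]].
    have NM : forall x, N x -> M x.
      by move=> x Nx [y hy]; apply: nN1; rewrite -hy; case: NI => _ [_ ]; apply.
    have [e|M1] := Nmax M MI NM.
      by move=> x; split; [exact: NM | move=> Mx; apply/(e x)].
    by case: nM1.
  + move=> S SS.
    have [n [n0 [a0 [Sa0 hdiv]]]] := H S SS.
    exists n; split => //; exists (a0 ^+ n) => x; split.
    * move=> Hx; apply: (Hx (fun y => exists r, y = r * a0 ^+ n)); last first.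
        by move=> t [d [Sd ->]]; apply: hdiv.
      split; first by exists 0; rewrite mul0r.
      split; first by move=> _ _ [r1 ->] [r2 ->]; exists (r1 + r2); rewrite mulrDl.
      by move=> r _ [r1 ->]; exists (r * r1); rewrite mulrA.
    * move=> [r ->] I [_ [_ IM]] HT; apply: IM; apply: HT; by exists a0.
Qed.
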